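(* For all integers $m\geq 3$ and $n\geq 2$, the graph $C[m]\times P[n+1]$ is antimagic.
   Context: All graphs are finite, undirected and simple. $C[m]$ denotes the cycle on $m$ vertices and $P[k]$ the path on $k$ vertices. The Cartesian product $G_1\times G_2$ of graphs $G_1=(V_1,E_1)$ and $G_2=(V_2,E_2)$ has vertex set $V_1\times V_2$, with $(u_1,u_2)$ adjacent to $(v_1,v_2)$ iff either $u_1=v_1$ and $u_2v_2\in E_2$, or $u_2=v_2$ and $u_1v_1\in E_1$. An antimagic labeling of a graph with $m'$ edges is a bijection $f$ from its edge set to $\{1,\ldots,m'\}$ such that the vertex sums $f^+(v)=\sum_{e\ni v} f(e)$ (sum over edges incident with $v$) are pairwise distinct over all vertices $v$. A graph is antimagic if it admits an antimagic labeling. *)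

(* Defs.v *)
From mathcomp Require Import all_boot all_order.
Unset Printing Implicit Defensive.

Record sgraph := SGraph {
  vtx : finType;
  adj : rel vtx;
  adj_sym : symmetric adj;
  adj_irr : irreflexive adj }.

Definition edges (G : sgraph) : {set {set vtx G}} :=
  [set [set u; v] | u in vtx G, v in [pred v | adj G u v]].

Definition antimagic_labeling (G : sgraph) (f : {set vtx G} -> nat) : Prop :=
  {in edges G &, injective f} /\
  (forall e, e \in edges G -> 1 <= f e <= #|edges G|) /\
  injective (fun v : vtx G => \sum_(e in edges G | v \in e) f e).

Definition antimagic (G : sgraph) : Prop := exists f, antimagic_labeling G f.

Definition cprod_adj (G1 G2 : sgraph) : rel (vtx G1 * vtx G2) :=
  fun x y => ((x.1 == y.1) && adj G2 x.2 y.2) || ((x.2 == y.2) && adj G1 x.1 y.1).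

Lemma cprod_sym G1 G2 : symmetric (cprod_adj G1 G2).
Proof.
move=> [a b] [c d]; rewrite /cprod_adj /= [c == a]eq_sym [d == b]eq_sym.
by rewrite (adj_sym G2 b d) (adj_sym G1 a c).
Qed.

Lemma cprod_irr G1 G2 : irreflexive (cprod_adj G1 G2).
Proof. by move=> [a b]; rewrite /cprod_adj /= (adj_irr G1) (adj_irr G2) !andbF. Qed.

Definition cprod (G1 G2 : sgraph) : sgraph :=
  @SGraph _ (cprod_adj G1 G2) (cprod_sym G1 G2) (cprod_irr G1 G2).

(* Cycle C[m] on vertices 0..m-1 (i ~ i+1 mod m), meaningful for m >= 3. *)
Definition cycle_adj (m : nat) : rel 'I_m :=
  fun i j => (i != j) && ((j == (i.+1 %% m) :> nat) || (i == (j.+1 %% m) :> nat)).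

Lemma cycle_sym m : symmetric (cycle_adj m).
Proof. by move=> i j; rewrite /cycle_adj eq_sym orbC. Qed.

Lemma cycle_irr m : irreflexive (cycle_adj m).
Proof. by move=> i; rewrite /cycle_adj eqxx. Qed.

Definition cycleG (m : nat) : sgraph := @SGraph _ (cycle_adj m) (cycle_sym m) (cycle_irr m).

Definition path_adj (k : nat) : rel 'I_k :=
  fun i j => (j == i.+1 :> nat) || (i == j.+1 :> nat).

Lemma path_sym k : symmetric (path_adj k).
Proof. by move=> i j; rewrite /path_adj orbC. Qed.

Lemma path_irr k : irreflexive (path_adj k).
Proof.
by move=> [i hi]; rewrite /path_adj /= orbb; apply/negbTE; rewrite neq_ltn ltnSn.
Qed.

Definition pathG (k : nat) : sgraph := @SGraph _ (path_adj k) (path_sym k) (path_irr k).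

(* Main.v *)
Require Import Defs.
From mathcomp Require Import all_boot.
From mathcomp Require Import zify.
Set Implicit Arguments. Unset Strict Implicit.

Definition tl (m k : nat) := minn (2*k+1) (2*m-2*k-2).
Definition ps (m k : nat) := minn (2*k) (2*m-2*k-1).
Definition bH (n j : nat) := if j < n then j else 2*n.
Definition Hlab m n (i j : nat) := m * bH n j + tl m i + 1.
Definition Vlab m n (i j : nat) := m * (n + j) + ps m i + 1.
Definition prv m (i : nat) := if i == 0 then m - 1 else i - 1.

Definition S m n (i j : nat) :=
  Hlab m n i j + Hlab m n (prv m i) j +
  ((if j < n then Vlab m n i j else 0) + (if j is k.+1 then Vlab m n i k else 0)).

Lemma ps_inj m i i' : i < m -> i' < m -> ps m i = ps m i' -> i = i'.
Proof. rewrite /ps; lia. Qed.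


Lemma S_across m n i i' j j' : 3 <= m -> 1 <= n -> j < j' -> j' <= n -> i < m -> i' < m ->
  S m n i j < S m n i' j'.
Proof.
move=> hm hn hjj hj' hi hi'.
have t1 : tl m i + tl m (prv m i) <= 2*m - 3.
  by rewrite /tl /prv; case: (i =P 0) => [->|?]; lia.
have t2 : ps m i < m by rewrite /ps; lia.
case: j' hjj hj' => [|k'] // hjj hj'.
have h2 : m * k'.+1 <= m * n by rewrite leq_mul2l hj' orbT.
have h3 : m * 1 <= m * n by rewrite leq_mul2l hn orbT.
rewrite /S /Hlab /Vlab /bH.
have -> : j < n by lia.
case: (k'.+1 =P n) => [ej'|nj'].
  rewrite -ej' ltnn.
  case: j hjj t1 t2 => [|k] hjj t1 t2.
    lia.
  have h1 : m * k.+2 <= m * k'.+1 by rewrite leq_mul2l hjj orbT.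
  lia.
have -> : k'.+1 < n by lia.
case: j hjj t1 t2 => [|k] hjj t1 t2.
  lia.
have h1 : m * k.+2 <= m * k'.+1 by rewrite leq_mul2l hjj orbT.
lia.
Qed.
Definition F m p := if p == 0 then 1 else if p == m - 1 then 2*p - 1 else 2*p.
Lemma s_eq m i : 3 <= m -> i < m -> tl m i + tl m (prv m i) = F m (ps m i).
Proof.
move=> hm hi; rewrite /F.
case: (ps m i =P 0) => h0; case: (ps m i =P m - 1) => h1; move: h0 h1;
rewrite /tl /prv /ps; case: (i =P 0) => hi0; lia.
Qed.
Lemma F_mono m p p' : 3 <= m -> p < p' -> p' < m -> F m p < F m p'.
Proof.
move=> hm hp hp'; rewrite /F.
case: (p =P 0) => h0; case: (p' =P 0) => h0'; case: (p =P m-1) => h1; case: (p' =P m-1) => h1'; lia.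
Qed.
Lemma x m n i i' j : 3 <= m -> 1 <= n -> j <= n -> i < m -> i' < m ->
  ps m i < ps m i' -> S m n i j < S m n i' j.
Proof.
move=> hm hn hj hi hi' hp.
have hpi : ps m i' < m by rewrite /ps; lia.
have := F_mono hm hp hpi.
rewrite -(s_eq hm hi) -(s_eq hm hi').
rewrite /S /Hlab /Vlab.
case: (j < n); case: j hj => [|k] hj; lia.
Qed.
Lemma S_inj m n i i' j j' : 3 <= m -> 1 <= n -> j <= n -> j' <= n -> i < m -> i' < m ->
  S m n i j = S m n i' j' -> i = i' /\ j = j'.
Proof.
move=> hm hn hj hj' hi hi' E.
case: (ltngtP j j') => hjj.
- by have := S_across hm hn hjj hj' hi hi'; rewrite E ltnn.
- by have := S_across hm hn hjj hj hi' hi; rewrite E ltnn.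
subst j'; split => //.
case: (ltngtP (ps m i) (ps m i')) => hp.
- by have := x hm hn hj hi hi' hp; rewrite E ltnn.
- by have := x hm hn hj hi' hi hp; rewrite E ltnn.
exact: ps_inj hi hi' hp.
Qed.

Lemma divmod_eq m a b x y : x < m -> y < m -> m*a + x = m*b + y -> a = b /\ x = y.
Proof.
move=> hx hy E.
case: (ltngtP a b) => h.
- have : m * a.+1 <= m * b by rewrite leq_mul2l h orbT. lia.
- have : m * b.+1 <= m * a by rewrite leq_mul2l h orbT. lia.
- subst; lia.
Qed.

Lemma tl_lt m i : i < m -> tl m i < m. Proof. rewrite /tl; lia. Qed.
Lemma ps_lt m i : i < m -> ps m i < m. Proof. rewrite /ps; lia. Qed.
Lemma tl_inj m i i' : i < m -> i' < m -> tl m i = tl m i' -> i = i'.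
Proof. rewrite /tl; lia. Qed.

Lemma Hlab_inj m n i i' j j' : i < m -> i' < m -> j <= n -> j' <= n ->
  Hlab m n i j = Hlab m n i' j' -> i = i' /\ j = j'.
Proof.
move=> hi hi' hj hj'; rewrite /Hlab !addn1 => -[].
case/divmod_eq; try exact: tl_lt.
move=> hb /(tl_inj hi hi') ->; split => //.
move: hb; rewrite /bH; case: ifP; case: ifP; lia.
Qed.

Lemma HV_neq m n i i' j j' : i < m -> i' < m -> j <= n -> j' < n ->
  Hlab m n i j <> Vlab m n i' j'.
Proof.
move=> hi hi' hj hj'; rewrite /Hlab /Vlab !addn1 => -[].
case/divmod_eq; try exact: tl_lt; try exact: ps_lt.
move=> hb _; move: hb; rewrite /bH; case: ifP; lia.
Qed.

Lemma Vlab_inj m n i i' j j' : i < m -> i' < m ->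
  Vlab m n i j = Vlab m n i' j' -> i = i' /\ j = j'.
Proof.
move=> hi hi'; rewrite /Vlab !addn1 => -[].
case/divmod_eq; try exact: ps_lt.
move=> hb /(ps_inj hi hi') ->; split => //; lia.
Qed.

Lemma Hlab_bd m n i j : i < m -> j <= n -> 1 <= Hlab m n i j <= m * n.+1 + m * n.
Proof.
move=> hi hj; have := tl_lt hi.
have : m * bH n j <= m * (2 * n) by rewrite leq_mul2l /bH; case: ifP; lia.
rewrite /Hlab; lia.
Qed.

Lemma Vlab_bd m n i j : i < m -> j < n -> 1 <= Vlab m n i j <= m * n.+1 + m * n.
Proof.
move=> hi hj; have := ps_lt hi.
have : m * (n + j) <= m * (2 * n - 1) by rewrite leq_mul2l; lia.
rewrite /Vlab; lia.
Qed.

Lemma ord_gt0 m (i : 'I_m) : 0 < m.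
Proof. by case: i => i /=; lia. Qed.
Lemma succ_lt m (i : 'I_m) : i.+1 %% m < m.
Proof. by rewrite ltn_pmod // (ord_gt0 i). Qed.
Definition osucc m (i : 'I_m) : 'I_m := Ordinal (succ_lt i).
Lemma prv_lt m (i : 'I_m) : prv m i < m.
Proof. by case: i => i hi; rewrite /prv /=; case: (i =P 0); lia. Qed.
Definition opred m (i : 'I_m) : 'I_m := Ordinal (prv_lt i).
Lemma lo_lt n (j : 'I_n) : (j : nat) < n.+1.
Proof. by case: j => j /=; lia. Qed.
Lemma hi_lt n (j : 'I_n) : j.+1 < n.+1.
Proof. by case: j => j /=; lia. Qed.
Definition vlo n (j : 'I_n) : 'I_n.+1 := Ordinal (lo_lt j).
Definition vhi n (j : 'I_n) : 'I_n.+1 := Ordinal (hi_lt j).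

Lemma modS m i : i < m -> i.+1 %% m = if i.+1 == m then 0 else i.+1.
Proof. by move=> hi; case: eqP => [->|ne]; [rewrite modnn | rewrite modn_small //; lia]. Qed.

Lemma osucc_val m (i : 'I_m) : (osucc i : nat) = if i.+1 == m then 0 else i.+1.
Proof. by rewrite /= modS. Qed.

Lemma osuccK m (i : 'I_m) : opred (osucc i) = i.
Proof.
apply: val_inj; rewrite /= /prv modS //; case: i => i hi /=.
case: (i.+1 =P m) => h /=; lia.
Qed.

Lemma opredK m (i : 'I_m) : osucc (opred i) = i.
Proof.
apply: val_inj => /=; rewrite modS ?(prv_lt i) //; move: (prv_lt i).
rewrite /prv; case: i => i hi /=.
case: (i =P 0) => h; case: eqP; lia.
Qed.

Lemma osucc_neq m (i : 'I_m) : 2 <= m -> osucc i != i.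
Proof. move=> hm; rewrite -val_eqE /= modS //; case: i => i hi /=; case: (i.+1 =P m); lia. Qed.

Lemma osucc2_neq m (i : 'I_m) : 3 <= m -> osucc (osucc i) != i.
Proof.
move=> hm; rewrite -val_eqE /= modS ?(succ_lt i) // modS //; case: i => i hi /=.
case: (i.+1 =P m) => h1 /=.
  case: (1 =P m); lia.
case: (i.+2 =P m); lia.
Qed.

Lemma set2_eq (T : finType) (a b c d : T) :
  [set a; b] = [set c; d] -> (a = c /\ b = d) \/ (a = d /\ b = c).
Proof.
move=> E.
have ha : a \in [set c; d] by rewrite -E !inE eqxx.
have hb : b \in [set c; d] by rewrite -E !inE eqxx orbT.
have hc : c \in [set a; b] by rewrite E !inE eqxx.
have hd : d \in [set a; b] by rewrite E !inE eqxx orbT.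
move: ha hb hc hd => /set2P[] -> /set2P[] -> /set2P[] h1 /set2P[] h2; subst; auto.
Qed.

Lemma sum2 (T : finType) (a b : T) (P : pred T) (F : T -> nat) : a != b ->
  (forall x, P x = (x == a) || (x == b)) -> \sum_(x | P x) F x = F a + F b.
Proof.
move=> ab hP; rewrite (bigD1 a) ?hP ?eqxx //= (big_pred1 b) // => x /=.
rewrite hP; case: (x =P a) => [->|_] /=; last by rewrite andbT.
by apply/esym/negbTE.
Qed.

Lemma sum1 (T : finType) (a : T) (P : pred T) (F : T -> nat) :
  (forall x, P x = (x == a)) -> \sum_(x | P x) F x = F a.
Proof. by move=> hP; rewrite (big_pred1 a). Qed.

Lemma booltest (a b c: nat) : ((a == b) || (a == c.+1)) = ((b == a) || (c == a.-1) && (0 < a)).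
Proof. apply/idP/idP; lia. Qed.

Notation code m n := (('I_m * 'I_n.+1) + ('I_m * 'I_n))%type.

Definition edgeset m n (c : code m n) : {set 'I_m * 'I_n.+1} :=
  match c with
  | inl x => [set x; (osucc x.1, x.2)]
  | inr p => [set (p.1, vlo p.2); (p.1, vhi p.2)]
  end.
Definition lab m n (c : code m n) : nat :=
  match c with inl x => Hlab m n x.1 x.2 | inr p => Vlab m n p.1 p.2 end.
Definition flab m n (e : {set 'I_m * 'I_n.+1}) : nat :=
  \sum_(c : code m n | edgeset c == e) lab c.

Lemma edgeset_inj m n : 3 <= m -> injective (@edgeset m n).
Proof.
move=> hm; have hm2 : 2 <= m by lia.
move=> [[a b]|[a b]] [[c d]|[c d]] /= /set2_eq.
- case => [[E _]|[[ha hb] [hc _]]]; first by rewrite E.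
  exfalso.
  by move: (osucc2_neq c hm); rewrite -ha hc eqxx.
- case => [[[ha hb] [hc _]]|[[ha hb] [hc _]]]; exfalso.
    have E : osucc a = a by congruence.
    by move: (osucc_neq a hm2); rewrite E eqxx.
  have E : osucc a = a by congruence.
  by move: (osucc_neq a hm2); rewrite E eqxx.
- case => [[[ha hb] [hc _]]|[[ha hb] [hc _]]]; exfalso.
    have E : osucc c = c by congruence.
    by move: (osucc_neq c hm2); rewrite E eqxx.
  have E : osucc c = c by congruence.
  by move: (osucc_neq c hm2); rewrite E eqxx.
- case => [[E1 E2]|[E1 E2]].
    case: E1 => ha hb.
    by rewrite ha (@ord_inj _ b d hb).
  case: E1 => _ hb; case: E2 => _ hd.
  exfalso; lia.
Qed.

Lemma flab_edgeset m n (c : code m n) : 3 <= m -> flab (edgeset c) = lab c.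
Proof.
move=> hm; rewrite /flab (big_pred1 c) // => c' /=.
by apply/eqP/eqP => [/(edgeset_inj hm)|->].
Qed.

Lemma ordS_le n (b : 'I_n.+1) : (b : nat) <= n.
Proof. by rewrite -ltnS ltn_ord. Qed.

Lemma lab_inj m n : injective (@lab m n).
Proof.
move=> [[a b]|[a b]] [[c d]|[c d]] /=.
- case/(Hlab_inj (ltn_ord a) (ltn_ord c) (ordS_le b) (ordS_le d)) => h1 h2.
  by rewrite (ord_inj h1) (ord_inj h2).
- by move/(HV_neq (ltn_ord a) (ltn_ord c) (ordS_le b) (ltn_ord d)).
- by move/esym/(HV_neq (ltn_ord c) (ltn_ord a) (ordS_le d) (ltn_ord b)).
- case/(Vlab_inj (ltn_ord a) (ltn_ord c)) => h1 h2.
  by rewrite (ord_inj h1) (ord_inj h2).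
Qed.

Lemma lab_bd m n (c : code m n) : 1 <= lab c <= m * n.+1 + m * n.
Proof.
case: c => [[a b]|[a b]] /=; [apply: Hlab_bd (ltn_ord a) (ordS_le b) | apply: Vlab_bd (ltn_ord a) (ltn_ord b)].
Qed.

Lemma edgeset_in m n (c : code m n) : 3 <= m ->
  edgeset c \in edges (cprod (cycleG m) (pathG n.+1)).
Proof.
move=> hm; have hm2 : 2 <= m by lia.
rewrite /edges; case: c => [[a b]|[a b]] /=; apply/imset2P.
- exists (a, b) (osucc a, b) => //.
  rewrite inE /= /cprod_adj /= eqxx /=; apply/orP; right.
  by rewrite /cycle_adj eq_sym osucc_neq //= eqxx.
- exists (a, vlo b) (a, vhi b) => //.
  by rewrite inE /= /cprod_adj /= eqxx /= /path_adj /= eqxx.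
Qed.

Lemma edges_sub m n e : e \in edges (cprod (cycleG m) (pathG n.+1)) ->
  exists c : code m n, e = edgeset c.
Proof.
case/imset2P => [[a b] [c d]] _; rewrite inE /= => hadj ->.
rewrite /cprod_adj /= in hadj.
case/orP: hadj => /andP[/eqP eac hp].
- subst c; move: hp; rewrite /path_adj => /orP[] /eqP h.
  + have hb : (b : nat) < n by case: d h => d /= hd; lia.
    exists (inr (a, Ordinal hb)) => /=.
    by congr [set (a, _); (a, _)]; apply: val_inj.
  + have hd : (d : nat) < n by case: b h => b /= hb; lia.
    exists (inr (a, Ordinal hd)) => /=; rewrite setUC.
    by congr [set (a, _); (a, _)]; apply: val_inj.
- subst d; case/andP: hp => _ /orP[] /eqP h.
  + exists (inl (a, b)) => /=.
    by congr [set _; (_, b)]; apply: val_inj.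
  + exists (inl (c, b)) => /=; rewrite setUC.
    by congr [set _; (_, b)]; apply: val_inj.
Qed.

Lemma edgesE m n : 3 <= m ->
  edges (cprod (cycleG m) (pathG n.+1)) = [set edgeset c | c in [set: code m n]].
Proof.
move=> hm; apply/setP => e; apply/idP/idP.
- by case/edges_sub => c ->; apply: imset_f; rewrite inE.
- by case/imsetP => c _ ->; apply: edgeset_in.
Qed.

Lemma sumH m n (v : 'I_m * 'I_n.+1) : 2 <= m ->
  \sum_(x : 'I_m * 'I_n.+1 | v \in [set x; (osucc x.1, x.2)]) Hlab m n x.1 x.2
  = Hlab m n v.1 v.2 + Hlab m n (prv m v.1) v.2.
Proof.
move=> hm.
rewrite (@sum2 _ v (opred v.1, v.2) _ (fun x => Hlab m n x.1 x.2)) //.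
- case: v => a b; rewrite xpair_eqE /= eqxx andbT.
  apply/eqP => E; have := osucc_neq a hm.
  by rewrite {1}E opredK eqxx.
- case: v => a b [c d]; rewrite !inE eq_sym; congr orb.
  rewrite !xpair_eqE /= (eq_sym b d); congr andb.
  by apply/eqP/eqP => [->|->]; rewrite ?osuccK ?opredK.
Qed.

Lemma sumV m n (v : 'I_m * 'I_n.+1) : 1 <= n ->
  \sum_(p : 'I_m * 'I_n | v \in [set (p.1, vlo p.2); (p.1, vhi p.2)]) Vlab m n p.1 p.2
  = (if v.2 < n then Vlab m n v.1 v.2 else 0) + (if (v.2 : nat) is k.+1 then Vlab m n v.1 k else 0).
Proof.
move=> hn; case: v => a [b hb] /=.
have hP : forall (p : 'I_m * 'I_n),
   ((a, Ordinal hb) \in [set (p.1, vlo p.2); (p.1, vhi p.2)]) =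
   (p.1 == a) && ((p.2 == b :> nat) || (p.2.+1 == b)).
  move=> [c d]; rewrite !inE !xpair_eqE -!val_eqE /=.
  lia.
case: b hb hP => [|k] hb hP.
- rewrite hn addn0.
  rewrite (@sum1 _ (a, Ordinal hn)) // => -[c d]; rewrite hP xpair_eqE -!val_eqE /=.
  by congr andb; lia.
case: (ltnP k.+1 n) => hk.
- have hk' : k < n by lia.
  rewrite (@sum2 _ (a, Ordinal hk) (a, Ordinal hk')) //.
    by rewrite xpair_eqE -!val_eqE /= eqxx /=; lia.
  move=> -[c d]; rewrite hP !xpair_eqE -!val_eqE /=.
  by case: (c == a); lia.
- have hk' : k < n by lia.
  rewrite add0n (@sum1 _ (a, Ordinal hk')) // => -[c d]; have := ltn_ord d.
  rewrite hP xpair_eqE -!val_eqE /=; lia.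
Qed.

Lemma vsum m n (v : 'I_m * 'I_n.+1) : 3 <= m -> 1 <= n ->
  \sum_(e in edges (cprod (cycleG m) (pathG n.+1)) | v \in e) flab e = S m n v.1 v.2.
Proof.
move=> hm hn.
rewrite (edgesE n hm) big_imset_cond; last by move=> c1 c2 _ _; apply: edgeset_inj.
rewrite (eq_bigr (fun c => lab c)); last by move=> c _; apply: flab_edgeset.
rewrite (eq_bigl (fun c => v \in edgeset c)); last by move=> c; rewrite inE.
rewrite big_sumType /= sumH ?sumV //; lia.
Qed.

Unset Implicit Arguments.

Theorem lemma4p1 (m n : nat) (hm : 3 <= m) (hn : 2 <= n) :
  antimagic (cprod (cycleG m) (pathG n.+1)).
Proof.
have hn1 : 1 <= n by lia.
have hcard : #|edges (cprod (cycleG m) (pathG n.+1))| = m * n.+1 + m * n.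
  rewrite (edgesE n hm) card_imset; last by apply: edgeset_inj.
  by rewrite cardsT card_sum !card_prod !card_ord.
exists (@flab m n); split; [|split].
- move=> e1 e2 /edges_sub[c1 ->] /edges_sub[c2 ->].
  by rewrite !flab_edgeset // => /lab_inj ->.
- by move=> e /edges_sub[c ->]; rewrite flab_edgeset // hcard lab_bd.
- move=> [a b] [c d] /=; rewrite !vsum //= => E.
  have := S_inj hm hn1 (ordS_le b) (ordS_le d) (ltn_ord a) (ltn_ord c) E.
  by case=> /ord_inj -> /ord_inj ->.
Qed.
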